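(* Let $G$ be a structurally saturated sequent. Then the relation $R_G$ on clusters of $G$ is a (partial) order and the relation $\le_G$ on clusters of $G$ is a preorder. If moreover $G$ is layered, then $\le_G$ on clusters is also an order.
   Context: A sequent $G$ is $\mathcal{R},\Gamma\Rightarrow\Delta$ with $\mathcal{R}$ a set of relational atoms $xRy$, $x\le y$ between labels and $\Gamma,\Delta$ multisets of labelled formulas $x{:}A$; $x\le_G y$, $xR_Gy$ mean the atom is in $\mathcal{R}$, and $x{:}C^\bullet$ means $x{:}C\in\Gamma$. $G$ is structurally saturated if: $x\le_G y$ and $x{:}C^\bullet$ imply $y{:}C^\bullet$; $xR_Gy$ and $y\le_G z$ imply some $u$ with $x\le_G u$, $uR_Gz$; $xR_Gy$ and $x\le_G z$ imply some $u$ with $y\le_G u$, $zR_Gu$; $\le_G$ and $R_G$ are transitive and reflexive on all labels. For structurally saturated $G$, a cluster is an equivalence class of $R_G\cap R_G^{-1}$. On clusters: $C_1\le_G C_2$ iff for every $y\in C_2$ there is $x\in C_1$ with $x\le_G y$; $C_1 R_G C_2$ iff there are $x\in C_1$, $y\in C_2$ with $xR_Gy$. A layer is an equivalence class of the reflexive-transitive closure of $R_G\cup R_G^{-1}$. $G$ is layered if for all labels $x,x',y,y'$: (1) if $x,y$ are in the same layer and $x\ne y$, then neither $x\le_G y$ nor $y\le_G x$; (2) if $x,y$ are in the same layer, $x',y'$ are in the same layer, $x\le_G x'$ and $x\ne x'$, then not $y'\le_G y$. *)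

(* Defs.v *)
From Stdlib Require Import List Relations.
Import ListNotations.

Definition label := nat.

(* Formulas of intuitionistic modal logic (the only property of formulas used
   by the statement is equality, in the persistence condition). *)
Inductive form : Type :=
| Var : nat -> form
| Bot : form
| And : form -> form -> form
| Or  : form -> form -> form
| Imp : form -> form -> form
| Box : form -> form
| Dia : form -> form.

Inductive ratom : Type :=
| ARel : label -> label -> ratom
| ALe  : label -> label -> ratom.

Definition lform := (label * form)%type.

(* A sequent  R, Gamma => Delta  (multisets represented by lists). *)
Record sequent := Sequent {
  rel   : list ratom;
  gamma : list lform;
  delta : list lform
}.

Definition leG (G : sequent) (x y : label) : Prop := In (ALe x y) (rel G).
Definition RG  (G : sequent) (x y : label) : Prop := In (ARel x y) (rel G).

Definition is_label (G : sequent) (x : label) : Prop :=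
  (exists y, In (ARel x y) (rel G) \/ In (ARel y x) (rel G)
          \/ In (ALe x y) (rel G) \/ In (ALe y x) (rel G))
  \/ (exists A, In (x, A) (gamma G))
  \/ (exists A, In (x, A) (delta G)).

Definition struct_saturated (G : sequent) : Prop :=
  (forall x y C, leG G x y -> In (x, C) (gamma G) -> In (y, C) (gamma G)) /\
  (forall x y z, RG G x y -> leG G y z -> exists u, leG G x u /\ RG G u z) /\
  (forall x y z, RG G x y -> leG G x z -> exists u, leG G y u /\ RG G z u) /\
  (forall x y z, leG G x y -> leG G y z -> leG G x z) /\
  (forall x y z, RG G x y -> RG G y z -> RG G x z) /\
  (forall x, is_label G x -> leG G x x) /\
  (forall x, is_label G x -> RG G x x).

Definition cluster_of (G : sequent) (x : label) : label -> Prop :=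
  fun y => RG G x y /\ RG G y x.

Definition is_cluster (G : sequent) (C : label -> Prop) : Prop :=
  exists x, is_label G x /\ C = cluster_of G x.

Definition cle (G : sequent) (C1 C2 : label -> Prop) : Prop :=
  forall y, C2 y -> exists x, C1 x /\ leG G x y.

Definition cR (G : sequent) (C1 C2 : label -> Prop) : Prop :=
  exists x y, C1 x /\ C2 y /\ RG G x y.

Definition preorder_on {T : Type} (P : T -> Prop) (r : T -> T -> Prop) : Prop :=
  (forall a, P a -> r a a) /\
  (forall a b c, P a -> P b -> P c -> r a b -> r b c -> r a c).

Definition order_on {T : Type} (P : T -> Prop) (r : T -> T -> Prop) : Prop :=
  preorder_on P r /\
  (forall a b, P a -> P b -> r a b -> r b a -> a = b).

Definition same_layer (G : sequent) : label -> label -> Prop :=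
  clos_refl_trans label (fun a b => RG G a b \/ RG G b a).

Definition layered (G : sequent) : Prop :=
  (forall x y, is_label G x -> is_label G y ->
     same_layer G x y -> x <> y -> ~ leG G x y /\ ~ leG G y x) /\
  (forall x x' y y', is_label G x -> is_label G x' -> is_label G y -> is_label G y' ->
     same_layer G x y -> same_layer G x' y' -> leG G x x' -> x <> x' ->
     ~ leG G y' y).

(* Main.v *)
Require Import Defs.
From Stdlib Require Import List Relations FunctionalExtensionality PropExtensionality PeanoNat.

Lemma RG_lab1 G x y : RG G x y -> is_label G x.
Proof. intro H. left. exists y. left. exact H. Qed.
Lemma RG_lab2 G x y : RG G x y -> is_label G y.
Proof. intro H. left. exists x. right. left. exact H. Qed.

Lemma cl_eq G x y : struct_saturated G -> RG G x y -> RG G y x ->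
  cluster_of G x = cluster_of G y.
Proof.
  intros (_&_&_&_&Rt&_&_) H1 H2.
  apply functional_extensionality; intro z. apply propositional_extensionality.
  unfold cluster_of; split; intros [A B]; split; eauto.
Qed.

Theorem mainTheorem5 (G : sequent) :
  struct_saturated G ->
  order_on (is_cluster G) (cR G) /\
  preorder_on (is_cluster G) (cle G) /\
  (layered G -> order_on (is_cluster G) (cle G)).
Proof.
  intro S. pose proof S as S'.
  destruct S' as (_&_&_&Lt&Rt&Lr&Rr).
  split; [|split].
  - split; [split|].
    + intros C (x&Hx&->). exists x, x. unfold cluster_of. auto.
    + intros C1 C2 C3 (x&Hx&->) (y&Hy&->) (z&Hz&->)
        (a&b&[Ha1 Ha2]&[Hb1 Hb2]&Hab) (b'&c&[Hb1' Hb2']&[Hc1 Hc2]&Hbc).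
      exists a, c. unfold cluster_of. repeat split; eauto.
    + intros C1 C2 (x&Hx&->) (y&Hy&->)
        (a&b&[Ha1 Ha2]&[Hb1 Hb2]&Hab) (b'&a'&[Hb1' Hb2']&[Ha1' Ha2']&Hba).
      apply cl_eq; eauto.
  - split.
    + intros C (x&Hx&->) y Hy. exists y. split; auto.
      apply Lr. destruct Hy as [H _]. eapply RG_lab2; eauto.
    + intros C1 C2 C3 _ _ _ H12 H23 z Hz.
      destruct (H23 z Hz) as (y&Hy&Hyz). destruct (H12 y Hy) as (x&Hx&Hxy).
      exists x. eauto.
  - intros [_ L2]. split; [split|].
    + intros C (x&Hx&->) y Hy. exists y. split; auto.
      apply Lr. destruct Hy as [H _]. eapply RG_lab2; eauto.
    + intros C1 C2 C3 _ _ _ H12 H23 z Hz.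
      destruct (H23 z Hz) as (y&Hy&Hyz). destruct (H12 y Hy) as (x&Hx&Hxy).
      exists x. eauto.
    + intros C1 C2 (x&Hx&->) (y&Hy&->) H12 H21.
      assert (Hyy : cluster_of G y y) by (split; auto).
      destruct (H12 y Hyy) as (a&[Hxa Hax]&Hay).
      assert (Hxx : cluster_of G x x) by (split; auto).
      destruct (H21 x Hxx) as (b&[Hyb Hby]&Hbx).
      destruct (Nat.eq_dec a y) as [E|E].
      * subst a. apply cl_eq; auto.
      * exfalso. apply (L2 a y x b); eauto using RG_lab1, RG_lab2.
        -- apply rt_step. right. exact Hxa.
        -- apply rt_step. left. exact Hyb.
Qed.
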